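(* Let $m\ge1$, let $A_1,\dots,A_m\in\mathbb{C}^{n\times n}$ be invertible, let $p_1,\dots,p_m>0$, and let $Q\in\mathbb{C}^{n\times n}$ be Hermitian positive definite. Then the equation $$X-\sum_{i=1}^{m}A_i^*X^{p_i}A_i=Q$$ has a Hermitian positive definite solution $X$ if and only if each $A_i$ can be factored as $$A_i=(U^*MU)^{-p_i/2}\,V_i\,N\,U,\qquad i=1,\dots,m,$$ where $U$ is unitary, $M$ is a real diagonal matrix with $M>UQU^*$, $N$ is Hermitian positive definite with $M-N^2=UQU^*$, and $V_1,\dots,V_m\in\mathbb{C}^{n\times n}$ satisfy that the block column $\begin{pmatrix}V_1\\ \vdots\\ V_m\end{pmatrix}$ is column orthonormal, i.e. $\sum_{i=1}^m V_i^*V_i=I$. In this case $X=U^*MU$ is a solution.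
   Context: For Hermitian $X,Y$, $X>Y$ means $X-Y$ is positive definite. For a Hermitian positive definite matrix $P$ and real $t$, $P^t$ is the principal matrix power defined via the spectral decomposition. *)

(* Defs.v *)
From Stdlib Require Import Reals ClassicalEpsilon.
From mathcomp Require Import all_boot.

Set Implicit Arguments.
Unset Strict Implicit.
Unset Printing Implicit Defensive.

Local Open Scope R_scope.

Record C := mkC { re : R; im : R }.
Definition C0 : C := mkC 0 0.
Definition C1 : C := mkC 1 0.
Definition RtoC (x : R) : C := mkC x 0.
Definition Cadd (a b : C) : C := mkC (re a + re b) (im a + im b).
Definition Copp (a : C) : C := mkC (- re a) (- im a).
Definition Cmul (a b : C) : C :=
  mkC (re a * re b - im a * im b) (re a * im b + im a * re b).
Definition Cconj (a : C) : C := mkC (re a) (- im a).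

Definition mat (n : nat) := 'I_n -> 'I_n -> C.
Definition vec (n : nat) := 'I_n -> C.

Definition Csum (n : nat) (f : 'I_n -> C) : C := \big[Cadd/C0]_(k < n) f k.

Definition mzero (n : nat) : mat n := fun _ _ => C0.
Definition mid (n : nat) : mat n := fun i j => if i == j then C1 else C0.
Definition madd (n : nat) (X Y : mat n) : mat n := fun i j => Cadd (X i j) (Y i j).
Definition msub (n : nat) (X Y : mat n) : mat n :=
  fun i j => Cadd (X i j) (Copp (Y i j)).
Definition mmul (n : nat) (X Y : mat n) : mat n :=
  fun i j => Csum (fun k => Cmul (X i k) (Y k j)).
Definition madj (n : nat) (X : mat n) : mat n := fun i j => Cconj (X j i).
Definition mdiag (n : nat) (d : 'I_n -> R) : mat n :=
  fun i j => if i == j then RtoC (d i) else C0.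
Definition msum (n m : nat) (F : 'I_m -> mat n) : mat n :=
  fun i j => \big[Cadd/C0]_(k < m) F k i j.

Definition hermitian (n : nat) (X : mat n) : Prop := madj X = X.
Definition quadform (n : nat) (X : mat n) (x : vec n) : C :=
  Csum (fun i => Csum (fun j => Cmul (Cconj (x i)) (Cmul (X i j) (x j)))).
Definition posdef (n : nat) (X : mat n) : Prop :=
  hermitian X /\ forall x : vec n, (exists i, x i <> C0) -> 0 < re (quadform X x).
Definition unitary (n : nat) (U : mat n) : Prop :=
  mmul (madj U) U = @mid n /\ mmul U (madj U) = @mid n.
Definition invertible (n : nat) (A : mat n) : Prop :=
  exists B : mat n, mmul A B = @mid n /\ mmul B A = @mid n.

Definition spec_pow (n : nat) (P : mat n) (t : R) (Y : mat n) : Prop :=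
  exists (W : mat n) (d : 'I_n -> R),
    unitary W /\ (forall i, 0 < d i) /\
    P = mmul (madj W) (mmul (mdiag d) W) /\
    Y = mmul (madj W) (mmul (mdiag (fun i => Rpower (d i) t)) W).

(* principal matrix power P^t (meaningful for Hermitian positive definite P,
   where the spectral power is unique); junk value P otherwise. *)
Definition matpow (n : nat) (P : mat n) (t : R) : mat n :=
  match excluded_middle_informative (exists Y, spec_pow P t Y) with
  | left H => proj1_sig (constructive_indefinite_description _ H)
  | right _ => P
  end.

(* Main.v *)
Require Import Defs.
From Stdlib Require Import Reals FunctionalExtensionality.
From Stdlib Require Classical ClassicalEpsilon.
From mathcomp Require Import all_boot all_order all_algebra.
From mathcomp Require Import complex Rstruct.

Module RH.
Local Open Scope R_scope.
Definition zR : R := 0.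
Definition oneR : R := 1.
Lemma Rpow_sum x a b c : 0 < x -> a + b = c -> Rpower x a * Rpower x b = Rpower x c.
Proof. by move=> _ <-; rewrite Rpower_plus. Qed.
Lemma Rpow_sum' x a b c : a + b = c -> Rpower x a * Rpower x b = Rpower x c.
Proof. by move=> <-; rewrite Rpower_plus. Qed.
Lemma Rpow_zero x c : c = zR -> Rpower x c = oneR.
Proof. by move=> ->; rewrite /Rpower /zR /oneR Rmult_0_l exp_0. Qed.
Lemma Rpow_one x c : 0 < x -> c = oneR -> Rpower x c = x.
Proof. by move=> hx ->; rewrite /oneR Rpower_1. Qed.
Lemma Rpow_pos x c : 0 < Rpower x c.
Proof. exact: exp_pos. Qed.
Definition halfR : R := / 2.
Definition mhalfR : R := - / 2.
Lemma hh : halfR + halfR = oneR.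
Proof. rewrite /halfR /oneR; field. Qed.
Lemma mhh : mhalfR + halfR = zR.
Proof. rewrite /mhalfR /halfR /zR; field. Qed.
Lemma hmh : halfR + mhalfR = zR.
Proof. rewrite /mhalfR /halfR /zR; field. Qed.
End RH.
Import RH.

Module Aux.
Import GRing.Theory Num.Theory Num.Def Order.TTheory.
Local Open Scope ring_scope.

Notation CC := (complex Rdefinitions.R).
Definition phi (c : Defs.C) : CC := Complex (re c) (im c).
Definition psi (z : CC) : Defs.C := mkC (complex.Re z) (complex.Im z).
Lemma phiK c : psi (phi c) = c. Proof. by case: c. Qed.
Lemma psiK z : phi (psi z) = z. Proof. by case: z. Qed.
Lemma phiD a b : phi (Cadd a b) = phi a + phi b.
Proof. by case: a b => [? ?] [? ?]. Qed.
Lemma phiM a b : phi (Cmul a b) = phi a * phi b.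
Proof. by case: a b => [? ?] [? ?]. Qed.
Lemma phiJ a : phi (Cconj a) = (phi a)^*%R.
Proof. by case: a => [? ?]. Qed.
Lemma phiN a : phi (Copp a) = - phi a.
Proof. by case: a => [? ?]. Qed.
Lemma phi0 : phi Defs.C0 = 0. Proof. by []. Qed.
Lemma phi1 : phi Defs.C1 = 1. Proof. by []. Qed.
Lemma phiR x : phi (RtoC x) = (x%:C)%C. Proof. by []. Qed.
Lemma phi_sum n (f : 'I_n -> Defs.C) :
  phi (\big[Cadd/Defs.C0]_(k < n) f k) = \sum_(k < n) phi (f k).
Proof. exact: (big_morph phi phiD phi0). Qed.

Notation adjm M := (map_mx conjC (trmx M)).

Section Transfer.
Variable n : nat.
Definition Phi (X : mat n) : 'M[CC]_n := \matrix_(i, j) phi (X i j).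
Definition Psi (M : 'M[CC]_n) : mat n := fun i j => psi (M i j).
Lemma PhiPsi M : Phi (Psi M) = M.
Proof. by apply/matrixP => i j; rewrite mxE psiK. Qed.
Lemma PsiPhi X : Psi (Phi X) = X.
Proof.
apply: functional_extensionality => i; apply: functional_extensionality => j.
by rewrite /Psi mxE phiK.
Qed.
Lemma Phi_inj X Y : Phi X = Phi Y -> X = Y.
Proof. by move=> h; rewrite -(PsiPhi X) h PsiPhi. Qed.
Lemma Phi_mmul X Y : Phi (mmul X Y) = Phi X *m Phi Y.
Proof.
apply/matrixP => i j; rewrite !mxE /mmul /Csum phi_sum.
by apply: eq_bigr => k _; rewrite phiM !mxE.
Qed.
Lemma Phi_madj X : Phi (madj X) = adjm (Phi X).
Proof. by apply/matrixP => i j; rewrite !mxE phiJ. Qed.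
Lemma Phi_msub X Y : Phi (msub X Y) = Phi X - Phi Y.
Proof. by apply/matrixP => i j; rewrite !mxE phiD phiN. Qed.
Definition Dg (d : 'I_n -> Rdefinitions.R) : 'M[CC]_n := diag_mx (\row_i ((d i)%:C)%C).
Lemma Phi_mdiag d : Phi (mdiag d) = Dg d.
Proof.
apply/matrixP => i j; rewrite !mxE /mdiag.
by case: (eqVneq i j) => [->|h]; rewrite ?eqxx ?mulr1n // (negbTE h) mulr0n.
Qed.
Lemma Phi_mid : Phi (@mid n) = 1%:M.
Proof.
apply/matrixP => i j; rewrite !mxE /mid.
by case: (i == j).
Qed.
Lemma Phi_msum m (F : 'I_m -> mat n) : Phi (msum F) = \sum_(k < m) Phi (F k).
Proof.
apply/matrixP => i j; rewrite !mxE /msum phi_sum summxE.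
by apply: eq_bigr => k _; rewrite mxE.
Qed.

Definition qf (M : 'M[CC]_n) (v : 'cV[CC]_n) : CC := (adjm v *m M *m v) 0 0.
Lemma qfE M v : qf M v = \sum_i \sum_j (v i 0)^* * (M i j * v j 0).
Proof.
rewrite /qf mxE; under eq_bigr do rewrite mxE big_distrl /=.
rewrite exchange_big; apply: eq_bigr => i _; apply: eq_bigr => j _.
by rewrite !mxE mulrA.
Qed.
Definition colv (x : vec n) : 'cV[CC]_n := \col_i phi (x i).
Lemma phi_quadform X x : phi (quadform X x) = qf (Phi X) (colv x).
Proof.
rewrite qfE /quadform /Csum phi_sum; apply: eq_bigr => i _.
rewrite phi_sum; apply: eq_bigr => j _.
by rewrite !phiM phiJ !mxE.
Qed.
Definition pd (M : 'M[CC]_n) :=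
  adjm M = M /\ forall v : 'cV[CC]_n, v != 0 -> 0 < complex.Re (qf M v).
Lemma hermitian_Phi X : Defs.hermitian X <-> adjm (Phi X) = Phi X.
Proof.
rewrite /Defs.hermitian -Phi_madj; split; first by move=> ->.
exact: Phi_inj.
Qed.
Lemma nz_colv (x : vec n) : (exists i, x i <> Defs.C0) <-> colv x != 0.
Proof.
split.
  move=> [i hi]; apply/eqP => /matrixP /(_ i 0); rewrite !mxE => h.
  by apply: hi; rewrite -(phiK (x i)) h.
move=> h; apply/Classical_Pred_Type.not_all_not_ex => hx; move/eqP: h; apply.
apply/matrixP => i j; rewrite !mxE.
by have := hx i => /Classical_Prop.NNPP ->.
Qed.
Lemma colv_psi (v : 'cV[CC]_n) : colv (fun i => psi (v i 0)) = v.
Proof. by apply/matrixP => i j; rewrite !mxE psiK ord1. Qed.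
Lemma posdef_Phi X : posdef X <-> pd (Phi X).
Proof.
rewrite /posdef /pd hermitian_Phi; split => -[h1 h2]; split => //.
  move=> v vn0; rewrite -[v]colv_psi -phi_quadform; apply/RltP; apply: h2.
  by apply/nz_colv; rewrite colv_psi.
move=> x /nz_colv hx; have := h2 _ hx; rewrite -phi_quadform => /RltP.
by [].
Qed.

Definition Uni (W : 'M[CC]_n) := adjm W *m W = 1%:M /\ W *m adjm W = 1%:M.
Lemma unitary_Phi U : unitary U <-> Uni (Phi U).
Proof.
rewrite /unitary /Uni -!Phi_madj -!Phi_mmul -Phi_mid.
split => -[h1 h2]; split; by [rewrite h1 | rewrite h2 | apply: Phi_inj].
Qed.
Lemma invertible_Phi A : invertible A -> forall v : 'cV[CC]_n, v != 0 -> Phi A *m v != 0.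
Proof.
move=> [B [_ hBA]] v; apply: contra => /eqP h.
have := congr1 Phi hBA; rewrite Phi_mmul Phi_mid => e.
by rewrite -[v]mul1mx -e -mulmxA h mulmx0.
Qed.
End Transfer.
Arguments Dg {n}.
Arguments Phi {n}.
Arguments Psi {n}.
Arguments colv {n}.
Arguments qf {n}.
Arguments pd {n}.
Arguments Uni {n}.

Section Gen.
Lemma adjmM m k l (A : 'M[CC]_(m, k)) (B : 'M[CC]_(k, l)) :
  adjm (A *m B) = adjm B *m adjm A.
Proof. by rewrite trmx_mul map_mxM. Qed.
Lemma adjmK m k (A : 'M[CC]_(m, k)) : adjm (adjm A) = A.
Proof. by apply/matrixP => i j; rewrite !mxE conjCK. Qed.
Lemma adjmD m k (A B : 'M[CC]_(m, k)) : adjm (A + B) = adjm A + adjm B.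
Proof. by apply/matrixP => i j; rewrite !mxE rmorphD. Qed.
Lemma adjmB m k (A B : 'M[CC]_(m, k)) : adjm (A - B) = adjm A - adjm B.
Proof. by apply/matrixP => i j; rewrite !mxE rmorphB. Qed.
Lemma adjm1 k : adjm (1%:M : 'M[CC]_k) = 1%:M.
Proof. by rewrite trmx1 map_mx1. Qed.
Lemma adjm_sum m k l (F : 'I_l -> 'M[CC]_(m, k)) :
  adjm (\sum_(i < l) F i) = \sum_(i < l) adjm (F i).
Proof.
apply/matrixP => i j; rewrite !mxE !summxE rmorph_sum.
by apply: eq_bigr => x _; rewrite !mxE.
Qed.
Lemma conj_realC (x : Rdefinitions.R) : ((x%:C)%C : CC)^* = (x%:C)%C.
Proof. exact: conjc_real. Qed.
Lemma adjm_Dg n d : adjm (Dg d : 'M[CC]_n) = Dg d.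
Proof.
apply/matrixP => i j; rewrite !mxE eq_sym.
case: (eqVneq i j) => [->|h]; first by rewrite !mulr1n conj_realC.
by rewrite !mulr0n rmorph0.
Qed.
Lemma Dg_mul n (d e : 'I_n -> Rdefinitions.R) :
  Dg d *m Dg e = Dg (fun i => d i * e i).
Proof.
rewrite /Dg mulmx_diag; congr diag_mx; apply/matrixP => i j; rewrite !mxE.
by rewrite -rmorphM.
Qed.

Lemma comm_diag_fun n (S : 'M[CC]_n) d1 d2 (f : Rdefinitions.R -> Rdefinitions.R) :
  S *m Dg d1 = Dg d2 *m S ->
  S *m Dg (fun i => f (d1 i)) = Dg (fun i => f (d2 i)) *m S.
Proof.
move=> SD; apply/matrixP => i j; move/matrixP: SD => /(_ i j).
rewrite /Dg !mul_mx_diag !mul_diag_mx !mxE.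
have [->|Sn0] := eqVneq (S i j) 0; first by move=> _; rewrite mulr0 mul0r.
move=> h; have : ((d1 j)%:C)%C = ((d2 i)%:C)%C :> CC.
  by apply: (mulIf Sn0); rewrite mulrC h.
by move/complexI => ->; rewrite mulrC.
Qed.

Lemma spec_unique n (W1 W2 : 'M[CC]_n) d1 d2 (f : Rdefinitions.R -> Rdefinitions.R) :
  Uni W1 -> Uni W2 ->
  adjm W1 *m (Dg d1 *m W1) = adjm W2 *m (Dg d2 *m W2) ->
  adjm W1 *m (Dg (fun i => f (d1 i)) *m W1) = adjm W2 *m (Dg (fun i => f (d2 i)) *m W2).
Proof.
move=> [u1 u1'] [u2 u2'] E.
set S := W2 *m adjm W1.
have SD : S *m Dg d1 = Dg d2 *m S.
  have := congr1 (fun M => W2 *m M *m adjm W1) E => /=.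
  rewrite !mulmxA u2' mul1mx -!mulmxA u1' mulmx1 /S => <-.
  by rewrite !mulmxA.
have SF : S *m Dg (fun i => f (d1 i)) = Dg (fun i => f (d2 i)) *m S.
  exact: comm_diag_fun.
symmetry.
transitivity (adjm W2 *m (Dg (fun i => f (d2 i)) *m S) *m W1).
  by rewrite /S !mulmxA -(mulmxA _ (adjm W1) W1) u1 mulmx1.
by rewrite -SF /S !mulmxA u2 mul1mx.
Qed.
End Gen.

Lemma matpow_Phi n (P : mat n) (W : 'M[CC]_n) (d : 'I_n -> Rdefinitions.R) t :
  Uni W -> (forall i, Rlt 0 (d i)) -> Phi P = adjm W *m (Dg d *m W) ->
  Phi (matpow P t) = adjm W *m (Dg (fun i => Rpower (d i) t) *m W).
Proof.
move=> hW hd hP.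
have hs : spec_pow P t (Psi (adjm W *m (Dg (fun i => Rpower (d i) t) *m W))).
  exists (Psi W), d; split; first by apply/unitary_Phi; rewrite PhiPsi.
  split; first exact: hd. split.
    by apply: Phi_inj; rewrite !Phi_mmul Phi_madj Phi_mdiag PhiPsi.
  by apply: Phi_inj; rewrite !Phi_mmul Phi_madj Phi_mdiag !PhiPsi.
rewrite /matpow; case: ClassicalEpsilon.excluded_middle_informative => [H|H]; last by exfalso; apply: H; exists (Psi (adjm W *m (Dg (fun i => Rpower (d i) t) *m W))).
case: ClassicalEpsilon.constructive_indefinite_description => Y [W' [d' [hW' [hd' [hP' hY]]]]] /=.
rewrite hY !Phi_mmul Phi_madj Phi_mdiag.
apply: (@spec_unique _ _ _ _ _ (fun x => Rpower x t)); [exact/unitary_Phi | exact: hW |].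
by rewrite -Phi_mdiag -Phi_madj -!Phi_mmul -hP' hP.
Qed.

Section Core.
Variable n : nat.
Implicit Types (M B W : 'M[CC]_n) (v w : 'cV[CC]_n).

Lemma qf_conj B M v : qf (adjm B *m (M *m B)) v = qf M (B *m v).
Proof. by rewrite /qf adjmM !mulmxA. Qed.
Lemma qfB M1 M2 v : qf (M1 - M2) v = qf M1 v - qf M2 v.
Proof. by rewrite /qf mulmxBr mulmxBl !mxE. Qed.
Lemma qf_sum m (F : 'I_m -> 'M[CC]_n) v :
  qf (\sum_(i < m) F i) v = \sum_(i < m) qf (F i) v.
Proof. by rewrite /qf mulmx_sumr mulmx_suml summxE. Qed.
Lemma qf_diag (r : 'rV[CC]_n) w : qf (diag_mx r) w = \sum_i r 0 i * `|w i 0| ^+ 2.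
Proof.
rewrite /qf -mulmxA mul_diag_mx mxE; apply: eq_bigr => i _.
by rewrite !mxE normCKC mulrCA.
Qed.
Lemma ReD (a b : CC) : complex.Re (a + b) = complex.Re a + complex.Re b.
Proof. by case: a b => [? ?] [? ?]. Qed.
Lemma ReN (a : CC) : complex.Re (- a) = - complex.Re a.
Proof. by case: a => [? ?]. Qed.
Lemma ReB (a b : CC) : complex.Re (a - b) = complex.Re a - complex.Re b.
Proof. by rewrite ReD ReN. Qed.
Lemma Re_sum m (F : 'I_m -> CC) : complex.Re (\sum_(i < m) F i) = \sum_(i < m) complex.Re (F i).
Proof. exact: (big_morph _ ReD). Qed.
Lemma Re_gt0 (z : CC) : 0 < z -> 0 < complex.Re z.
Proof. by rewrite ltcE => /andP[]. Qed.
Lemma Re_ge0 (z : CC) : 0 <= z -> 0 <= complex.Re z.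
Proof. by rewrite lecE => /andP[]. Qed.

Lemma nz_entry w : w != 0 -> exists k, w k 0 != 0.
Proof.
move=> wn0; apply: Classical_Prop.NNPP => h; apply: (negP wn0); apply/eqP.
apply/matrixP => i j; rewrite !mxE ord1.
apply: Classical_Prop.NNPP => hi; apply: h; exists i; apply/negP => /eqP; exact: hi.
Qed.

Lemma sum_diag_ge0 (a : 'I_n -> Rdefinitions.R) w : (forall k, 0 <= a k) ->
  0 <= \sum_k ((a k)%:C)%C * `|w k 0| ^+ 2.
Proof.
move=> ha; apply: sumr_ge0 => k _; apply: mulr_ge0; first by rewrite ler0c.
exact: exprn_ge0.
Qed.
Lemma sum_diag_gt0 (a : 'I_n -> Rdefinitions.R) w : (forall k, 0 < a k) -> w != 0 ->
  0 < \sum_k ((a k)%:C)%C * `|w k 0| ^+ 2.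
Proof.
move=> ha /nz_entry [k hk]; rewrite (bigD1 k) //=; apply: ltr_pwDl.
  apply: mulr_gt0; first by rewrite -[0]/((0%:C)%C) ltcR.
  by apply: exprn_gt0; rewrite normr_gt0.
apply: sumr_ge0 => i _; apply: mulr_ge0; first by rewrite ler0c ltW.
exact: exprn_ge0.
Qed.
Lemma qf_Dg d w : qf (Dg d) w = \sum_k ((d k)%:C)%C * `|w k 0| ^+ 2.
Proof. by rewrite /Dg qf_diag; apply: eq_bigr => k _; rewrite mxE. Qed.

Lemma herm_conj W d : adjm (adjm W *m (Dg d *m W)) = adjm W *m (Dg d *m W).
Proof. by rewrite !adjmM adjmK adjm_Dg mulmxA. Qed.

Lemma pd_conj W d : adjm W *m W = 1%:M -> (forall k, 0 < d k) ->
  pd (adjm W *m (Dg d *m W)).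
Proof.
move=> hW hd; split; first exact: herm_conj.
move=> v vn0; rewrite qf_conj qf_Dg; apply: Re_gt0; apply: sum_diag_gt0 => //.
apply: contra vn0 => /eqP h; by rewrite -[v]mul1mx -hW -mulmxA h mulmx0.
Qed.
Lemma psd_conj W d v : (forall k, 0 <= d k) ->
  0 <= complex.Re (qf (adjm W *m (Dg d *m W)) v).
Proof. by move=> hd; rewrite qf_conj qf_Dg; apply: Re_ge0; apply: sum_diag_ge0. Qed.

Lemma pd_congr Q B : pd Q -> (forall v, v != 0 -> B *m v != 0) ->
  pd (adjm B *m (Q *m B)).
Proof.
move=> [hQ1 hQ2] hB; split; first by rewrite !adjmM adjmK hQ1 mulmxA.
by move=> v vn0; rewrite qf_conj; apply: hQ2; apply: hB.
Qed.

Lemma qf_delta (r : 'rV[CC]_n) k : qf (diag_mx r) (delta_mx k 0) = r 0 k.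
Proof.
rewrite qf_diag (bigD1 k) //= big1 ?addr0.
  by rewrite !mxE !eqxx /= normr1 expr1n mulr1.
by move=> i hi; rewrite !mxE (negbTE hi) /= normr0 expr0n /= mulr0.
Qed.

Lemma spectral_pd X : pd X ->
  exists W d, Uni W /\ (forall k, 0 < d k) /\ X = adjm W *m (Dg d *m W).
Proof.
move=> [hX1 hX2].
have hn : X \is normalmx by apply/normalmxP; rewrite hX1.
move/orthomx_spectralP: hn; set P := spectralmx X; set sp := spectral_diag X => E.
have hP : P *m adjm P = 1%:M by apply/unitarymxP; exact: spectral_unitarymx.
have hP' : adjm P *m P = 1%:M by apply: mulmx1C.
have iP : invmx P = adjm P by apply: invmx_unitary; exact: spectral_unitarymx.
rewrite iP -mulmxA in E.
have Dh : adjm (diag_mx sp) = diag_mx sp.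
  have := congr1 (fun M => P *m M *m adjm P) hX1 => /=.
  rewrite {2}E {1}E !adjmM adjmK !mulmxA hP mul1mx -!mulmxA hP mulmx1.
  by rewrite mul1mx mulmx1.
have hk k : 0 < complex.Re (sp 0 k) /\ complex.Im (sp 0 k) = 0.
  split.
    have vn0 : adjm P *m (delta_mx k (0 : 'I_1) : 'cV[CC]_n) != 0.
      apply/eqP => h; have := congr1 (mulmx P) h.
      rewrite mulmxA hP mul1mx mulmx0 => /matrixP /(_ k 0); rewrite !mxE !eqxx /=.
      by move/eqP; rewrite oner_eq0.
    have := hX2 _ vn0; rewrite {1}E qf_conj mulmxA hP mul1mx.
    by rewrite qf_delta.
  move/matrixP: Dh => /(_ k k); rewrite !mxE !eqxx !mulr1n.
  case: (sp 0 k) => a b /= [] /eqP; rewrite eq_sym -subr_eq0 opprK -mulr2n mulrn_eq0 /=.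
  by move/eqP.
exists P, (fun k => complex.Re (sp 0 k)); split; first by split.
split; first by move=> k; case: (hk k).
rewrite E; congr (_ *m (_ *m _)); congr diag_mx; apply/matrixP => i k.
rewrite !mxE ord1; case: (hk k); case: (sp 0 k) => a b /= _ ->.
by [].
Qed.
End Core.

Section Pow.
Variable n : nat.
Implicit Types (U W : 'M[CC]_n).
Lemma Dg1 : Dg (fun _ : 'I_n => oneR) = 1%:M.
Proof.
apply/matrixP => i j; rewrite !mxE.
by case: (i == j); rewrite ?mulr1n ?mulr0n.
Qed.
Lemma Dg_ext (d e : 'I_n -> Rdefinitions.R) : (forall k, d k = e k) -> Dg d = Dg e.
Proof. by move=> h; congr Dg; apply: functional_extensionality. Qed.
Lemma conj_mul U (a b : 'I_n -> Rdefinitions.R) : U *m adjm U = 1%:M ->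
  (adjm U *m (Dg a *m U)) *m (adjm U *m (Dg b *m U)) =
  adjm U *m (Dg (fun k => a k * b k) *m U).
Proof.
move=> hU; rewrite !mulmxA -(mulmxA _ U (adjm U)) hU mulmx1.
by rewrite -(mulmxA _ (Dg a)) Dg_mul ?mulmxA.
Qed.
Lemma conj_pow U (d : 'I_n -> Rdefinitions.R) a b c : U *m adjm U = 1%:M ->
  (forall k, Rlt 0 (d k)) -> Rplus a b = c ->
  (adjm U *m (Dg (fun k => Rpower (d k) a) *m U)) *m
    (adjm U *m (Dg (fun k => Rpower (d k) b) *m U)) =
  adjm U *m (Dg (fun k => Rpower (d k) c) *m U).
Proof.
move=> hU hd habc; rewrite conj_mul //; congr (_ *m (_ *m _)); apply: Dg_ext => k.
exact: Rpow_sum.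
Qed.
Lemma conj_pow1 U (d : 'I_n -> Rdefinitions.R) a b : U *m adjm U = 1%:M -> adjm U *m U = 1%:M ->
  Rplus a b = zR ->
  (adjm U *m (Dg (fun k => Rpower (d k) a) *m U)) *m
    (adjm U *m (Dg (fun k => Rpower (d k) b) *m U)) = 1%:M.
Proof.
move=> hU hU' habc; rewrite conj_mul //.
rewrite (@Dg_ext _ (fun _ => oneR)) ?Dg1 ?mul1mx //.
by move=> k; exact: (eq_trans (Rpow_sum' (d k) a b zR habc) (Rpow_zero (d k) zR (erefl _))).
Qed.

Lemma adjm_inj_nz U (v : 'cV[CC]_n) : U *m adjm U = 1%:M -> v != 0 -> adjm U *m v != 0.
Proof.
move=> hU; apply: contra => /eqP h.
by rewrite -[v]mul1mx -hU -mulmxA h mulmx0.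
Qed.

Lemma dpos U Q d : Uni U -> pd Q -> pd (Dg d - U *m (Q *m adjm U)) -> forall k, 0 < d k.
Proof.
move=> [hU hU'] hQ [_ hK] k.
have en0 : (delta_mx k (0 : 'I_1) : 'cV[CC]_n) != 0.
  apply/eqP => /matrixP /(_ k 0); rewrite !mxE !eqxx /=.
  by move/eqP; rewrite oner_eq0.
have h1 := hK _ en0.
have hQ' : pd (adjm (adjm U) *m (Q *m adjm U)).
  by apply: pd_congr => // v; apply: adjm_inj_nz.
rewrite adjmK in hQ'.
have h2 := hQ'.2 _ en0.
rewrite qfB ReB /Dg qf_delta mxE /= in h1.
rewrite -subr_gt0; apply: lt_trans h1 _.
by rewrite subr0 ltrBlDr ?ltrDl ?ltrDr.
Qed.

Lemma part2M m (U Q N : 'M[CC]_n) d (V A Pw Pp : 'I_m -> 'M[CC]_n) (a b : 'I_m -> Rdefinitions.R) :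
  Uni U -> pd N -> (forall k, 0 < d k) ->
  Dg d - N *m N = U *m (Q *m adjm U) ->
  \sum_i adjm (V i) *m V i = 1%:M ->
  (forall i, Rplus (Rplus (a i) (b i)) (a i) = zR) ->
  (forall i, Pw i = adjm U *m (Dg (fun k => Rpower (d k) (a i)) *m U)) ->
  (forall i, Pp i = adjm U *m (Dg (fun k => Rpower (d k) (b i)) *m U)) ->
  (forall i, A i = Pw i *m (V i *m (N *m U))) ->
  adjm U *m (Dg d *m U) - \sum_i adjm (A i) *m (Pp i *m A i) = Q.
Proof.
move=> [hU hU'] [hN _] hd hNN hV hab hPw hPp hA.
have hd' k : Rlt 0 (d k) by apply/RltP.
have key i : Pw i *m (Pp i *m Pw i) = 1%:M.
  rewrite hPw hPp mulmxA (conj_pow U d (a i) (b i) _ hU' hd' (erefl _)).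
  exact: conj_pow1.
have hPwh i : adjm (Pw i) = Pw i by rewrite hPw herm_conj.
have termE i : adjm (A i) *m (Pp i *m A i) =
    adjm U *m N *m (adjm (V i) *m V i) *m N *m U.
  rewrite hA !adjmM hN hPwh !mulmxA.
  rewrite -[_ *m Pw i *m Pp i *m Pw i]mulmxA -[_ *m Pw i *m (Pp i *m Pw i)]mulmxA.
  by rewrite key mulmx1.
rewrite (eq_bigr _ (fun i _ => termE i)) -!mulmx_suml -mulmx_sumr hV mulmx1.
have E : adjm U *m ((Dg d - N *m N) *m U) =
    adjm U *m (Dg d *m U) - adjm U *m N *m N *m U.
  by rewrite mulmxBl mulmxBr !mulmxA.
by rewrite -E hNN !mulmxA hU mul1mx -mulmxA hU mulmx1.
Qed.

Lemma part1M m (i0 : 'I_m) (X Q W : 'M[CC]_n) (lam : 'I_n -> Rdefinitions.R)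
  (A Pp Pw Ph : 'I_m -> 'M[CC]_n) (a b c : 'I_m -> Rdefinitions.R) :
  Uni W -> (forall k, 0 < lam k) -> X = adjm W *m (Dg lam *m W) ->
  (forall i (v : 'cV[CC]_n), v != 0 -> A i *m v != 0) ->
  (forall i, Pp i = adjm W *m (Dg (fun k => Rpower (lam k) (b i)) *m W)) ->
  (forall i, Pw i = adjm W *m (Dg (fun k => Rpower (lam k) (a i)) *m W)) ->
  (forall i, Ph i = adjm W *m (Dg (fun k => Rpower (lam k) (c i)) *m W)) ->
  (forall i, Rplus (c i) (c i) = b i) -> (forall i, Rplus (a i) (c i) = zR) ->
  X - \sum_i adjm (A i) *m (Pp i *m A i) = Q ->
  exists N (V : 'I_m -> 'M[CC]_n),
    pd (Dg lam - W *m (Q *m adjm W)) /\ pd N /\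
    Dg lam - N *m N = W *m (Q *m adjm W) /\
    \sum_i adjm (V i) *m V i = 1%:M /\
    (forall i, A i = Pw i *m (V i *m (N *m W))).
Proof.
move=> [hW hW'] hl hX hA hPp hPw hPh hcc hac hE.
have hl' k : Rlt 0 (lam k) by apply/RltP.
set S := \sum_i _ in hE.
have KE : Dg lam - W *m (Q *m adjm W) = W *m (S *m adjm W).
  rewrite -hE hX mulmxBl mulmxBr !mulmxA hW' mul1mx -mulmxA hW' mulmx1.
  by rewrite opprB addrC subrK.
have hPph i : adjm (Pp i) = Pp i by rewrite hPp herm_conj.
have hSh : adjm S = S.
  rewrite /S adjm_sum; apply: eq_bigr => i _.
  by rewrite !adjmM adjmK hPph mulmxA.
have hKpd : pd (Dg lam - W *m (Q *m adjm W)).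
  rewrite KE; split.
    by rewrite !adjmM adjmK hSh mulmxA.
  move=> v vn0; rewrite -{1}[W]adjmK qf_conj /S qf_sum Re_sum.
  have wn0 := adjm_inj_nz W v hW' vn0.
  rewrite (bigD1 i0) //=; apply: ltr_pwDl.
    have hpos k : 0 < Rpower (lam k) (b i0) by apply/RltP; apply: Rpow_pos.
    rewrite qf_conj hPp. have := (pd_conj _ W _ hW hpos).2 _ (hA i0 _ wn0). done.
  apply: sumr_ge0 => i _; rewrite qf_conj hPp; apply: psd_conj.
  by move=> k; apply/ltW/RltP; apply: Rpow_pos.
have [W2 [mu [[hW2 hW2'] [hmu KE2]]]] := spectral_pd _ _ hKpd.
have hmu' k : Rlt 0 (mu k) by apply/RltP.
set N := adjm W2 *m (Dg (fun k => Rpower (mu k) halfR) *m W2).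
set Ni := adjm W2 *m (Dg (fun k => Rpower (mu k) mhalfR) *m W2).
have NN : N *m N = adjm W2 *m (Dg mu *m W2).
  rewrite /N (conj_pow W2 mu halfR halfR oneR hW2' hmu' hh).
  by congr (_ *m (_ *m _)); apply: Dg_ext => k; apply: Rpow_one.
have NiN : Ni *m N = 1%:M by apply: conj_pow1 => //; exact: mhh.
have NNi : N *m Ni = 1%:M by apply: conj_pow1 => //; exact: hmh.
have pdN : pd N by apply: pd_conj => // k; apply/RltP; apply: Rpow_pos.
have hNih : adjm Ni = Ni by rewrite herm_conj.
have hPhh i : adjm (Ph i) = Ph i by rewrite hPh herm_conj.
have PhPh i : Ph i *m Ph i = Pp i.
  by rewrite hPh hPp; apply: conj_pow => //; exact: hcc.
have PwPh i : Pw i *m Ph i = 1%:M.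
  by rewrite hPh hPw; apply: conj_pow1 => //; exact: hac.
clearbody N Ni.
exists N, (fun i => Ph i *m A i *m adjm W *m Ni).
split => //; split => //; split.
  by rewrite NN -KE2 opprB addrC subrK.
split.
  have termV i : adjm (Ph i *m A i *m adjm W *m Ni) *m (Ph i *m A i *m adjm W *m Ni) =
      Ni *m W *m (adjm (A i) *m (Pp i *m A i)) *m adjm W *m Ni.
    rewrite !adjmM adjmK hNih hPhh !mulmxA.
    by rewrite -[_ *m Ph i *m Ph i]mulmxA PhPh.
  rewrite (eq_bigr _ (fun i _ => termV i)) -!mulmx_suml -mulmx_sumr -/S.
  have -> : Ni *m W *m S *m adjm W *m Ni = Ni *m (W *m (S *m adjm W)) *m Ni.
    by rewrite !mulmxA.
  by rewrite -KE KE2 -NN mulmxA NiN mul1mx NNi.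
move=> i; rewrite !mulmxA PwPh mul1mx -[_ *m Ni *m N]mulmxA NiN mulmx1.
by rewrite -mulmxA hW mulmx1.
Qed.
End Pow.

Lemma part2H n m (A : 'I_m -> mat n) (Q : mat n) (hQ : posdef Q)
  (a b : 'I_m -> Rdefinitions.R) (hab : forall i, Rplus (Rplus (a i) (b i)) (a i) = zR)
  (U : mat n) (d : 'I_n -> Rdefinitions.R) (N : mat n) (V : 'I_m -> mat n) :
  unitary U ->
  posdef (msub (mdiag d) (mmul U (mmul Q (madj U)))) ->
  posdef N ->
  msub (mdiag d) (mmul N N) = mmul U (mmul Q (madj U)) ->
  msum (fun i => mmul (madj (V i)) (V i)) = @mid n ->
  (forall i, A i = mmul (matpow (mmul (madj U) (mmul (mdiag d) U)) (a i))
                       (mmul (V i) (mmul N U))) ->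
  let X := mmul (madj U) (mmul (mdiag d) U) in
  posdef X /\
  msub X (msum (fun i => mmul (madj (A i)) (mmul (matpow X (b i)) (A i)))) = Q.
Proof.
move=> /unitary_Phi hU /posdef_Phi hK /posdef_Phi hN hNN hV hAi X.
move/posdef_Phi: hQ => hQ.
rewrite Phi_msub Phi_mdiag !Phi_mmul Phi_madj in hK.
have hd := dpos _ _ _ _ hU hQ hK.
have hd' k : Rlt 0 (d k) by apply/RltP.
have PX : Phi X = adjm (Phi U) *m (Dg d *m Phi U).
  by rewrite /X !Phi_mmul Phi_madj Phi_mdiag.
have hpow t : Phi (matpow X t) = adjm (Phi U) *m (Dg (fun k => Rpower (d k) t) *m Phi U).
  exact: matpow_Phi.
split.
  by apply/posdef_Phi; rewrite PX; apply: pd_conj => //; case: hU.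
have hNN' : Dg d - Phi N *m Phi N = Phi U *m (Phi Q *m adjm (Phi U)).
  by move: (congr1 Phi hNN); rewrite Phi_msub Phi_mdiag !Phi_mmul Phi_madj.
have hV' : \sum_i adjm (Phi (V i)) *m Phi (V i) = 1%:M.
  move: (congr1 Phi hV); rewrite Phi_msum Phi_mid => <-.
  by apply: eq_bigr => i _; rewrite Phi_mmul Phi_madj.
have hA' i : Phi (A i) = Phi (matpow X (a i)) *m (Phi (V i) *m (Phi N *m Phi U)).
  by rewrite hAi !Phi_mmul.
have := part2M _ _ _ _ _ _ (fun i => Phi (V i)) (fun i => Phi (A i))
   (fun i => Phi (matpow X (a i))) (fun i => Phi (matpow X (b i))) a b
   hU hN hd hNN' hV' hab (fun i => hpow (a i)) (fun i => hpow (b i)) hA'.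
rewrite -PX => E.
apply: Phi_inj; rewrite Phi_msub Phi_msum -E; congr (_ - _).
by apply: eq_bigr => i _; rewrite !Phi_mmul Phi_madj.
Qed.

Lemma part1H n m (hm : (1 <= m)%N) (A : 'I_m -> mat n) (Q : mat n)
  (hA : forall i, invertible (A i)) (a b c : 'I_m -> Rdefinitions.R)
  (hcc : forall i, Rplus (c i) (c i) = b i) (hac : forall i, Rplus (a i) (c i) = zR) :
  (exists X : mat n, posdef X /\
     msub X (msum (fun i => mmul (madj (A i)) (mmul (matpow X (b i)) (A i)))) = Q) ->
  exists (U : mat n) (d : 'I_n -> Rdefinitions.R) (N : mat n) (V : 'I_m -> mat n),
    unitary U /\ posdef (msub (mdiag d) (mmul U (mmul Q (madj U)))) /\ posdef N /\
    msub (mdiag d) (mmul N N) = mmul U (mmul Q (madj U)) /\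
    msum (fun i => mmul (madj (V i)) (V i)) = @mid n /\
    (forall i, A i = mmul (matpow (mmul (madj U) (mmul (mdiag d) U)) (a i))
                         (mmul (V i) (mmul N U))).
Proof.
move=> [X [/posdef_Phi hX hE]].
have [W [lam [hW [hl EX]]]] := spectral_pd _ _ hX.
have hl' k : Rlt 0 (lam k) by apply/RltP.
have hpow t : Phi (matpow X t) = adjm W *m (Dg (fun k => Rpower (lam k) t) *m W).
  exact: matpow_Phi.
have hE' : Phi X - \sum_i adjm (Phi (A i)) *m (Phi (matpow X (b i)) *m Phi (A i)) = Phi Q.
  rewrite -hE Phi_msub Phi_msum; congr (_ - _).
  by apply: eq_bigr => i _; rewrite !Phi_mmul Phi_madj.
have hA' i (v : 'cV[CC]_n) : v != 0 -> Phi (A i) *m v != 0.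
  exact: invertible_Phi.
have [N [V [h1 [h2 [h3 [h4 h5]]]]]] :=
  part1M _ _ (Ordinal hm) (Phi X) (Phi Q) W lam (fun i => Phi (A i))
    (fun i => Phi (matpow X (b i))) (fun i => Phi (matpow X (a i)))
    (fun i => adjm W *m (Dg (fun k => Rpower (lam k) (c i)) *m W)) a b c
    hW hl EX hA' (fun i => hpow (b i)) (fun i => hpow (a i)) (fun i => erefl _)
    hcc hac hE'.
have XU : mmul (madj (Psi W)) (mmul (mdiag lam) (Psi W)) = X.
  by apply: Phi_inj; rewrite !Phi_mmul Phi_madj Phi_mdiag PhiPsi.
exists (Psi W), lam, (Psi N), (fun i => Psi (V i)).
split; first by apply/unitary_Phi; rewrite PhiPsi.
split.
  by apply/posdef_Phi; rewrite Phi_msub Phi_mdiag !Phi_mmul Phi_madj PhiPsi.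
split; first by apply/posdef_Phi; rewrite PhiPsi.
split.
  by apply: Phi_inj; rewrite Phi_msub Phi_mdiag !Phi_mmul Phi_madj !PhiPsi.
split.
  apply: Phi_inj; rewrite Phi_msum Phi_mid -h4; apply: eq_bigr => i _.
  by rewrite Phi_mmul Phi_madj PhiPsi.
move=> i; rewrite XU; apply: Phi_inj.
by rewrite !Phi_mmul !PhiPsi; exact: h5.
Qed.
End Aux.

Local Open Scope R_scope.

Theorem theorem2 (n m : nat) (hm : (1 <= m)%N)
  (A : 'I_m -> mat n) (p : 'I_m -> R) (Q : mat n)
  (hA : forall i, invertible (A i)) (hp : forall i, 0 < p i) (hQ : posdef Q) :
  ((exists X : mat n, posdef X /\
      msub X (msum (fun i => mmul (madj (A i)) (mmul (matpow X (p i)) (A i)))) = Q)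
   <->
   (exists (U : mat n) (d : 'I_n -> R) (N : mat n) (V : 'I_m -> mat n),
      unitary U /\
      posdef (msub (mdiag d) (mmul U (mmul Q (madj U)))) /\
      posdef N /\
      msub (mdiag d) (mmul N N) = mmul U (mmul Q (madj U)) /\
      msum (fun i => mmul (madj (V i)) (V i)) = @mid n /\
      (forall i, A i = mmul (matpow (mmul (madj U) (mmul (mdiag d) U)) (- p i / 2))
                           (mmul (V i) (mmul N U)))))
  /\
  (forall (U : mat n) (d : 'I_n -> R) (N : mat n) (V : 'I_m -> mat n),
      unitary U ->
      posdef (msub (mdiag d) (mmul U (mmul Q (madj U)))) ->
      posdef N ->
      msub (mdiag d) (mmul N N) = mmul U (mmul Q (madj U)) ->
      msum (fun i => mmul (madj (V i)) (V i)) = @mid n ->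
      (forall i, A i = mmul (matpow (mmul (madj U) (mmul (mdiag d) U)) (- p i / 2))
                           (mmul (V i) (mmul N U))) ->
      let X := mmul (madj U) (mmul (mdiag d) U) in
      posdef X /\
      msub X (msum (fun i => mmul (madj (A i)) (mmul (matpow X (p i)) (A i)))) = Q).
Proof.
have hab : forall i, Rplus (Rplus (- p i / 2) (p i)) (- p i / 2) = zR.
  by move=> i; rewrite /zR; field.
have hcc : forall i, Rplus (p i / 2) (p i / 2) = p i.
  by move=> i; field.
have hac : forall i, Rplus (- p i / 2) (p i / 2) = zR.
  by move=> i; rewrite /zR; field.
have P2 := Aux.part2H _ _ A Q hQ (fun i => - p i / 2) p hab.
split; last exact: P2.
split.
  exact: (Aux.part1H _ _ hm A Q hA (fun i => - p i / 2) p (fun i => p i / 2) hcc hac).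
move=> [U [d [N [V [h1 [h2 [h3 [h4 [h5 h6]]]]]]]]].
exists (mmul (madj U) (mmul (mdiag d) U)); exact: (P2 U d N V h1 h2 h3 h4 h5 h6).
Qed.
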